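(* For $n\ge0$ and $k\ge1$, $$\left|\Pi_n\wr C_k(1^11^2,1^12^2,1^21^1)\right|=\sum_{i_1+i_2+\dots+i_k=n}B(i_1)B(i_2)\cdots B(i_k),$$ where the sum is over all $k$-tuples of nonnegative integers $(i_1,\dots,i_k)$ with sum $n$ and $B(m)$ is the $m$th Bell number.
   Context: For $n\ge0$ let $[n]=\{1,\dots,n\}$. A $k$-colored set partition of $[n]$ is a set partition of $[n]$ together with an assignment of a color from $[k]$ to each element; $\Pi_n\wr C_k$ is the set of these. A colored partition $\sigma$ contains a two-element colored pattern in the pattern sense according to the following: $\sigma$ contains $1^11^2$ iff there are $i<j$ in the same block with color of $i$ strictly less than color of $j$; $\sigma$ contains $1^21^1$ iff there are $i<j$ in the same block with color of $i$ strictly greater than color of $j$; $\sigma$ contains $1^12^2$ iff there are $i<j$ in different blocks with color of $i$ strictly less than color of $j$. $\Pi_n\wr C_k(S)$ is the set of $\sigma\in\Pi_n\wr C_k$ containing none of the patterns in $S$. $B(m)$ is the number of set partitions of $[m]$, with $B(0)=1$. *)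

(* Defs.v *)
From mathcomp Require Import all_boot.
Set Implicit Arguments. Unset Strict Implicit. Unset Printing Implicit Defensive.

(* Conventions: [n] = {1..n} is modelled by 'I_n = {0..n-1} (order-preserving
   shift), colors [k] by 'I_k (order-preserving shift). *)

Definition set_partition (n : nat) (P : {set {set 'I_n}}) : bool :=
  partition P [set: 'I_n].

Definition bell (m : nat) : nat :=
  #|[set P : {set {set 'I_m}} | set_partition P]|.

Definition same_block (n : nat) (P : {set {set 'I_n}}) (i j : 'I_n) : bool :=
  [exists B in P, (i \in B) && (j \in B)].

Definition contains_11_12 n k (P : {set {set 'I_n}}) (c : {ffun 'I_n -> 'I_k}) :=
  [exists i : 'I_n, exists j : 'I_n,
     [&& i < j, same_block P i j & c i < c j]].

Definition contains_12_11 n k (P : {set {set 'I_n}}) (c : {ffun 'I_n -> 'I_k}) :=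
  [exists i : 'I_n, exists j : 'I_n,
     [&& i < j, same_block P i j & c j < c i]].

Definition contains_11_22 n k (P : {set {set 'I_n}}) (c : {ffun 'I_n -> 'I_k}) :=
  [exists i : 'I_n, exists j : 'I_n,
     [&& i < j, ~~ same_block P i j & c i < c j]].

Definition avoiders (n k : nat) :
  {set {set {set 'I_n}} * {ffun 'I_n -> 'I_k}} :=
  [set x | [&& set_partition x.1,
              ~~ contains_11_12 x.1 x.2,
              ~~ contains_11_22 x.1 x.2 &
              ~~ contains_12_11 x.1 x.2]].

(* Main.v *)
Require Import Defs.
From mathcomp Require Import all_boot zify.
Set Implicit Arguments. Unset Strict Implicit. Unset Printing Implicit Defensive.

Lemma parts_card (T : finType) (A : {set T}) :
  #|[set Q : {set {set T}} | partition Q A]| = bell #|A|.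
Proof.
rewrite /bell.
pose h := @enum_val T (mem A).
have hinj : injective h by apply: enum_val_inj.
have hA : h @: setT = A.
  apply/setP=> x; apply/imsetP/idP => [[i _ ->]|xA]; first exact: enum_valP.
  by exists (enum_rank_in xA x) => //; rewrite /h enum_rankK_in.
rewrite -(card_imset _ (imset_inj (imset_inj hinj))).
apply: eq_card => Q; rewrite !inE; apply/idP/imsetP.
- move=> QA.
  have eqQ : [set h @: (B : {set _}) | B in [set h @^-1: (B : {set T}) | B in Q]] = Q.
    rewrite -imset_comp -[RHS]imset_id; apply: eq_in_imset => B BQ /=.
    apply/setP => x; apply/imsetP/idP => [[y]|xB]; first by rewrite inE => hy ->.
    have xA : x \in A by apply: (subsetP (partitionS QA BQ)).
    by exists (enum_rank_in xA x); rewrite ?inE /h enum_rankK_in.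
  exists [set h @^-1: (B : {set T}) | B in Q]; last by rewrite eqQ.
  by rewrite inE /set_partition -(imset_partition _ _ hinj) eqQ hA.
- move=> [P]; rewrite inE /set_partition => PP ->.
  by have := imset_partition P setT hinj; rewrite PP hA.
Qed.

Definition mono (T L : finType) (f : T -> L) (P : {set {set T}}) :=
  [forall B in P, exists l, B \subset f @^-1: [set l]].

Lemma fib_eq (T L : finType) (f : T -> L) x l : x \in f @^-1: [set l] -> f x = l.
Proof. by rewrite !inE => /eqP. Qed.

Lemma factor (T L : finType) (f : T -> L) :
  #|[set P : {set {set T}} | partition P [set: T] && mono f P]| =
  \prod_(l : L) #|[set Q : {set {set T}} | partition Q (f @^-1: [set l])]|.
Proof.
pose fib l := f @^-1: [set l].
pose S l := [set Q : {set {set T}} | partition Q (fib l)].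
transitivity #|[set g : {ffun L -> {set {set T}}} | [forall l, g l \in S l]]|; last first.
  rewrite (eq_bigr (fun l => \sum_(Q | Q \in S l) 1)); last by move=> l _; rewrite sum1_card.
  rewrite (bigA_distr_big_dep (fun l Q => Q \in S l) (fun _ _ => 1)).
  rewrite (eq_bigr (fun _ => 1)); last by move=> g _; rewrite big1.
  rewrite sum1_card; apply: eq_card => g; rewrite inE; apply/forallP/familyP => H l; exact: H.
pose Phi (P : {set {set T}}) := [ffun l => [set B in P | B \subset fib l]].
have memPhi P B : mono f P -> (B \in P) = [exists l, B \in Phi P l].
  move=> /forallP mP; apply/idP/existsP => [BP|[l]]; last by rewrite ffunE inE => /andP[].
  have /existsP[l Bl] := implyP (mP B) BP.
  by exists l; rewrite ffunE inE BP.
rewrite -(card_in_imset (f:=Phi)); last first.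
  move=> P1 P2; rewrite !inE => /andP[_ m1] /andP[_ m2] E.
  by apply/setP => B; rewrite (memPhi _ _ m1) (memPhi _ _ m2) E.
apply: eq_card => g; rewrite [RHS]inE; apply/imsetP/forallP.
- move=> [P]; rewrite inE => /andP[PP /forallP mP] -> l; rewrite ffunE inE.
  move: PP => /and3P[/eqP cov triv n0].
  apply/and3P; split.
  + apply/eqP/setP => x; apply/bigcupP/idP => [[B]|xl].
      by rewrite inE => /andP[_ Bs] xB; apply: (subsetP Bs).
    have : x \in cover P by rewrite cov inE.
    move=> /bigcupP[B BP xB]; exists B => //; rewrite inE BP /=.
    have /existsP[l' Bl'] := implyP (mP B) BP.
    suff -> : l = l' by [].
    by rewrite -(fib_eq xl) (fib_eq (subsetP Bl' x xB)).
  + by apply: trivIsetS triv; apply/subsetP => B; rewrite inE => /andP[].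
  + by rewrite inE negb_and n0.
- move=> H; have Hp l : partition (g l) (fib l) by have := H l; rewrite inE.
  exists (\bigcup_l g l); last first.
    apply/ffunP => l; rewrite ffunE; apply/setP => B; rewrite [in RHS]inE; apply/esym.
    apply/andP/idP => [[/bigcupP[l' _ Bl'] Bs]|Bl].
      have /set0Pn[x xB] := partition_neq0 (Hp l') Bl'.
      have Bs' := partitionS (Hp l') Bl'.
      suff -> : l = l' by [].
      by rewrite -(fib_eq (subsetP Bs x xB)) (fib_eq (subsetP Bs' x xB)).
    by split; [apply/bigcupP; exists l|apply: (partitionS (Hp l))].
  rewrite inE; apply/andP; split; last first.
    apply/forallP => B; apply/implyP => /bigcupP[l _ Bl]; apply/existsP; exists l.
    exact: (partitionS (Hp l)).
  apply/and3P; split.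
  + apply/eqP/setP => x; rewrite inE; apply/bigcupP.
    have : x \in cover (g (f x)) by rewrite (cover_partition (Hp (f x))) !inE.
    move=> /bigcupP[B Bg xB]; exists B => //; apply/bigcupP; exists (f x) => //.
  + apply/trivIsetP => A B /bigcupP[la _ Aa] /bigcupP[lb _ Bb] neq.
    have [eab|nab] := eqVneq la lb.
      by subst lb; apply: (trivIsetP (partition_trivIset (Hp la))).
    apply/pred0P => x /=; apply/negP => /andP[xA xB].
    move: nab; rewrite -(fib_eq (subsetP (partitionS (Hp la) Aa) x xA)).
    by rewrite (fib_eq (subsetP (partitionS (Hp lb) Bb) x xB)) eqxx.
  + by apply/bigcupP => [[l _ h0]]; move: (partition0 (Hp l)); rewrite h0.
Qed.

Lemma card_ltn k m : #|[set l : 'I_k | l < m]| = minn m k.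
Proof.
rewrite -sum1_card (eq_bigl (fun l : 'I_k => l < m)); last by move=> l; rewrite inE.
rewrite big_mkcond /= -(big_mkord xpredT (fun l => if l < m then 1 else 0)).
elim: k => [|k IH]; first by rewrite big_nil; lia.
rewrite big_nat_recr //= IH; case: ltnP; lia.
Qed.

Lemma downset k (A : {set 'I_k}) :
  (forall x y : 'I_k, x <= y -> y \in A -> x \in A) -> forall x : 'I_k, (x \in A) = (x < #|A|).
Proof.
move=> H x; apply/idP/idP => [xA|].
  have : #|[set y : 'I_k | y < x.+1]| <= #|A|.
    apply: subset_leq_card; apply/subsetP => y; rewrite inE ltnS => yx; exact: H yx xA.
  by rewrite card_ltn; have := ltn_ord x; lia.
apply: contraLR => xA.
have : #|A| <= #|[set y : 'I_k | y < x]|.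
  apply: subset_leq_card; apply/subsetP => y yA; rewrite inE ltnNge.
  by apply/negP => xy; move: xA; rewrite (H _ _ xy yA).
by rewrite card_ltn; lia.
Qed.

Lemma card_pred_c n k (c : 'I_n -> 'I_k) (P : pred 'I_k) :
  #|[set j | P (c j)]| = \sum_(l | P l) #|[set j | c j == l]|.
Proof.
rewrite -sum1_card (eq_bigl (fun j => P (c j))); last by move=> j; rewrite inE.
rewrite (partition_big c P) //; apply: eq_bigr => l Pl.
rewrite -sum1_card; apply: eq_bigl => j; rewrite inE.
by case: eqP => [->|_]; rewrite ?Pl ?andbF.
Qed.

Definition decr n k (c : {ffun 'I_n -> 'I_k}) :=
  [forall i : 'I_n, forall j : 'I_n, (i < j) ==> (c j <= c i)].

Definition tc n k (c : {ffun 'I_n -> 'I_k}) : {ffun 'I_k -> 'I_n.+1} :=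
  [ffun l => inord #|[set i | c i == l]|].

Lemma tcE n k (c : {ffun 'I_n -> 'I_k}) l : (tc c l : nat) = #|[set i | c i == l]|.
Proof.
rewrite ffunE inordK // ltnS; apply: leq_trans (max_card _) _; by rewrite card_ord.
Qed.

Lemma decr_key n k (c : {ffun 'I_n -> 'I_k}) : decr c ->
  forall l i, (l < c i) = (i < #|[set j | l < c j]|).
Proof.
move=> dc l i; rewrite -(downset (A := [set j | l < c j])) ?inE //.
move=> x y; rewrite leq_eqVlt => /orP[/eqP e|lt]; first by rewrite (val_inj e).
rewrite !inE => h; apply: leq_trans h _.
by have := implyP (forallP (forallP dc x) y) lt.
Qed.

Lemma decr_inj n k (c c' : {ffun 'I_n -> 'I_k}) :
  decr c -> decr c' -> tc c = tc c' -> c = c'.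
Proof.
move=> dc dc' Ht.
have E l : #|[set j | l < c j]| = #|[set j | l < c' j]|.
  rewrite (card_pred_c c (fun x => l < x)) (card_pred_c c' (fun x => l < x)); apply: eq_bigr => l' _.
  by rewrite -(tcE c) -(tcE c') Ht.
apply/ffunP => i; apply/val_inj/eqP.
have Kl l : (l < c i) = (l < c' i) by rewrite (decr_key dc l i) (decr_key dc' l i) E.
have h1 : ~~ (c' i < c i) by rewrite Kl ltnn.
have h2 : ~~ (c i < c' i) by rewrite -Kl ltnn.
by move: h1 h2; rewrite -!leqNgt eqn_leq => -> ->.
Qed.

Lemma sum_tc n k (c : {ffun 'I_n -> 'I_k}) : \sum_l (tc c l : nat) = n.
Proof.
have := card_pred_c c xpredT.
rewrite (eq_bigr (fun l => (tc c l : nat))); last by move=> l _; rewrite tcE.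
move=> <-; rewrite -[RHS](card_ord n); apply: eq_card => i; by rewrite !inE.
Qed.

Lemma tc_exists n k' (t : {ffun 'I_k'.+1 -> 'I_n.+1}) :
  \sum_l (t l : nat) = n -> exists c : {ffun 'I_n -> 'I_k'.+1}, decr c && (tc c == t).
Proof.
move=> Ht.
pose S (m : nat) := \sum_(l < k'.+1 | m < l) (t l : nat).
have Sle m : S m <= n.
  rewrite -Ht /S big_mkcond; apply: leq_sum => l _; case: ifP => //.
have Santi x y : x <= y -> S y <= S x.
  move=> xy; rewrite /S [X in X <= _]big_mkcond [X in _ <= X]big_mkcond.
  apply: leq_sum => l _; case: (ltnP y l) => h; first by rewrite (leq_ltn_trans xy h).
  by case: ifP.
pose X (i : 'I_n) := [set l : 'I_k'.+1 | i < S l].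
have Xd i : forall x y : 'I_k'.+1, x <= y -> y \in X i -> x \in X i.
  by move=> x y xy; rewrite !inE => h; apply: leq_trans h (Santi _ _ xy).
have Xsz i : #|X i| < k'.+1.
  have := downset (Xd i) ord_max; rewrite inE /S big_pred0; last first.
    by move=> l; rewrite ltnNge -ltnS ltn_ord.
  rewrite ltn0 => /esym/negbT hn; rewrite ltnS leqNgt; exact: hn.
pose c := [ffun i => inord #|X i| : 'I_k'.+1].
have cE i : (c i : nat) = #|X i| by rewrite ffunE inordK.
have key (l : 'I_k'.+1) i : (l < c i) = (i < S l) by rewrite cE -(downset (Xd i)) inE.
exists c; apply/andP; split.
  apply/forallP=> i; apply/forallP => j; apply/implyP => ij; rewrite !cE.
  apply: subset_leq_card; apply/subsetP => l; rewrite !inE => h; exact: ltn_trans ij h.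
apply/eqP/ffunP => l; apply/val_inj; rewrite /= tcE.
have h1 : #|[set i : 'I_n | l < c i]| = S l.
  rewrite (eq_card (B := [set i : 'I_n | i < S l])); last by move=> i; rewrite !inE key.
  by rewrite card_ltn; have := Sle l; lia.
have h2 : #|[set i : 'I_n | l <= c i]| = t l + S l.
  case: l h1 => [[|l0] hl] h1.
    rewrite (eq_card (B := [set: 'I_n])); last by move=> i; rewrite !inE.
    rewrite cardsT card_ord -{1}Ht (bigD1 (Ordinal hl)) //=; congr (_ + _).
    by apply: eq_bigl => l'; rewrite -val_eqE /= lt0n.
  have hl' : l0 < k'.+1 by apply: ltnW.
  rewrite (eq_card (B := [set i : 'I_n | i < S l0])); last first.
    by move=> i; rewrite !inE -(key (Ordinal hl')).
  rewrite card_ltn; have := Sle l0.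
  have -> : S l0 = t (Ordinal hl) + S l0.+1.
    rewrite /S (bigD1 (Ordinal hl)) //=; congr (_ + _).
    by apply: eq_bigl => l'; rewrite -val_eqE /= [RHS]ltn_neqAle eq_sym andbC.
  change (S (Ordinal hl)) with (S l0.+1); lia.
have h3 := cardsID [set i : 'I_n | l < c i] [set i : 'I_n | l <= c i].
have e1 : [set i : 'I_n | l <= c i] :&: [set i | l < c i] = [set i | l < c i].
  by apply/setP => i; rewrite !inE; apply/andb_idl => /ltnW.
have e2 : [set i : 'I_n | l <= c i] :\: [set i | l < c i] = [set i | c i == l].
  by apply/setP => i; rewrite !inE -leqNgt -val_eqE /= eqn_leq.
rewrite e1 e2 h1 h2 in h3; apply: (@addnI (S l)); rewrite [RHS]addnC; exact h3.
Qed.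

Lemma avoid_char n k (P : {set {set 'I_n}}) (c : {ffun 'I_n -> 'I_k}) :
  set_partition P ->
  [&& ~~ contains_11_12 P c, ~~ contains_11_22 P c & ~~ contains_12_11 P c]
  = decr c && mono c P.
Proof.
move=> PP.
have D : (~~ contains_11_12 P c && ~~ contains_11_22 P c) = decr c.
  apply/andP/forallP => [[h1 h2] i|dc].
    apply/forallP => j; apply/implyP => ij; rewrite leqNgt; apply/negP => cij.
    case sb: (same_block P i j).
      move/negP: h1; apply; apply/existsP; exists i; apply/existsP; exists j.
      by rewrite ij sb cij.
    move/negP: h2; apply; apply/existsP; exists i; apply/existsP; exists j.
    by rewrite ij sb cij.
  split; apply/negP => /existsP[i /existsP[j /and3P[ij _ cij]]];
    have := implyP (forallP (dc i) j) ij; by rewrite leqNgt cij.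
rewrite andbA D; apply/andP/andP => [[dc h]|[dc m]]; split => //.
  apply/forallP => B; apply/implyP => BP.
  have /set0Pn[x xB] := partition_neq0 PP BP.
  apply/existsP; exists (c x); apply/subsetP => y yB; rewrite !inE.
  have eqc a b : a \in B -> b \in B -> a < b -> c a = c b.
    move=> aB bB ab; apply/val_inj/eqP; rewrite eqn_leq.
    have h' : ~~ (c b < c a).
      apply/negP => lt; move/negP: h; apply; apply/existsP; exists a.
      apply/existsP; exists b; rewrite ab lt andbT; apply/existsP; exists B.
      by rewrite BP aB bB.
    by rewrite leqNgt h' (implyP (forallP (forallP dc a) b) ab).
  case: (ltngtP x y) => [xy|yx|e].
  - by rewrite (eqc x y).
  - by rewrite (eqc y x).
  - by rewrite (val_inj e).
apply/negP => /existsP[i /existsP[j /and3P[ij /existsP[B /andP[BP /andP[iB jB]]] cji]]].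
have /existsP[l Bl] := implyP (forallP m B) BP.
by rewrite (fib_eq (subsetP Bl i iB)) (fib_eq (subsetP Bl j jB)) ltnn in cji.
Qed.

Lemma card_pairs (X Y : finType) (A : {set X * Y}) :
  #|A| = \sum_(y : Y) #|[set x | (x, y) \in A]|.
Proof.
rewrite -sum1_card big_mkcond /=.
rewrite (eq_bigr (fun p : X * Y => (fun x y => if (x, y) \in A then 1 else 0) p.1 p.2)); last first.
  by case.
rewrite -(pair_bigA _ (fun x y => if (x, y) \in A then 1 else 0)) exchange_big.
apply: eq_bigr => y _; rewrite -big_mkcond sum1_card; apply: eq_card => x; by rewrite inE.
Qed.

Theorem mainTheorem19 (n k : nat) (hk : 1 <= k) :
  #|avoiders n k| =
  \sum_(t : {ffun 'I_k -> 'I_n.+1} | \sum_(l < k) (t l : nat) == n)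
     \prod_(l < k) bell (t l).
Proof.
case: k hk => // k' _.
pose G (t : {ffun 'I_k'.+1 -> 'I_n.+1}) := \prod_(l < k'.+1) bell (t l).
rewrite card_pairs.
rewrite (eq_bigr (fun c => if decr c then G (tc c) else 0)); last first.
  move=> c _.
  have -> : #|[set P | (P, c) \in avoiders n k'.+1]| =
            #|[set P | partition P [set: 'I_n] && (decr c && mono c P)]|.
    apply: eq_card => P; rewrite !inE /=.
    case PP: (set_partition P) => /=; last by move: PP; rewrite /set_partition => ->.
    by rewrite avoid_char //; move: PP; rewrite /set_partition => ->.
  case: (decr c) => /=; last by apply: eq_card0 => P; rewrite !inE andbF.
  rewrite factor /G; apply: eq_bigr => l _; rewrite parts_card tcE; congr bell.
  by apply: eq_card => i; rewrite !inE.
rewrite -big_mkcond (partition_big (@tc n k'.+1) xpredT) //= [RHS]big_mkcond /=.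
apply: eq_bigr => t _.
have Hcnt : \sum_(c | decr c && (tc c == t)) 1 = (\sum_l (t l : nat) == n).
  case: (boolP (\sum_l (t l : nat) == n)) => [/eqP Hs|Hs].
    have [c0 /andP[d0 /eqP t0]] := tc_exists Hs.
    rewrite (big_pred1 c0) // => c; apply/andP/eqP => [[dc /eqP tc']|->].
      by apply: decr_inj; rewrite // tc' t0.
    by rewrite d0 t0 eqxx.
  rewrite big_pred0 // => c; apply/negbTE; apply: contra Hs => /andP[_ /eqP <-].
  by rewrite sum_tc.
transitivity ((\sum_(c | decr c && (tc c == t)) 1) * G t).
  by rewrite big_distrl /=; apply: eq_bigr => c /andP[_ /eqP ->]; rewrite mul1n.
by rewrite Hcnt; case: eqP => _; rewrite ?mul1n ?mul0n.
Qed.
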